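(* Let $G$ be a connected balanced weighted graph on the vertex set $V=\{1,\dots,n\}$ with symmetric real edge weights $\gamma_{ij}=\gamma_{ji}$, and let $V=V_1\cup V_2$ be a decomposition into two disjoint subsets such that $\gamma_{ij}\ge 0$ whenever $i,j$ lie in the same subset and $\gamma_{ij}\le 0$ whenever $i,j$ lie in different subsets. Let $W\in\mathcal{W}$, let $\kappa>0$, and let $x\in\mathbb{R}^n$ be a global minimizer of $$E_{W,G,\kappa}(x)=\sum_{i=1}^n W(x_i)+\frac{\kappa}{2}\sum_{i,j=1}^n\gamma_{ij}(x_i-x_j)^2 .$$ Then $x_i\neq 0$ for all $i$, and for all $i,j$, $x_i$ and $x_j$ have the same sign if and only if $i$ and $j$ belong to the same subset ($V_1$ or $V_2$).
   Context: A weighted graph $G=(V,E,\Gamma)$ has vertices $V=\{1,\dots,n\}$ and symmetric real weights $\gamma_{ij}=\gamma_{ji}$ (possibly negative) on its edges; $\gamma_{ij}=0$ if $i,j$ are not joined by an edge. $G$ is connected if the graph whose edges are the pairs $\{i,j\}$ with $\gamma_{ij}\neq0$ is connected. $G$ is balanced if every cycle contains an even number of edges with negative weight; for balanced graphs a decomposition $V=V_1\cup V_2$ as in the claim exists (Cartwright–Harary). $\mathcal{W}$ is the set of even functions $W\in C^2(\mathbb{R})$ for which there is some $m>0$ with $W'(\pm m)=0$, $W'(x)>0$ for $x\in(-m,0)\cup(m,\infty)$, $W'(x)<0$ for $x\in(-\infty,-m)\cup(0,m)$, and $\lim_{x\to\pm\infty}W(x)/x^2=\infty$. *)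

(* Defs.v *)
From Stdlib Require Import Reals Lra List Relations.
From Coquelicot Require Import Coquelicot.
Open Scope R_scope.

(* Vertices are 0..n-1 (i.e. i < n), corresponding to 1..n in the paper. *)

Fixpoint sumR (n : nat) (f : nat -> R) : R :=
  match n with
  | O => 0
  | S k => sumR k f + f k
  end.

Definition C2 (W : R -> R) : Prop :=
  (forall x, ex_derive W x) /\
  (forall x, ex_derive (Derive W) x) /\
  (forall x, continuous (Derive (Derive W)) x).

Definition in_classW (W : R -> R) : Prop :=
  C2 W /\
  (forall x, W (- x) = W x) /\
  (exists m : R, 0 < m /\
     Derive W m = 0 /\ Derive W (- m) = 0 /\
     (forall x, ((- m < x < 0) \/ m < x) -> Derive W x > 0) /\
     (forall x, (x < - m \/ (0 < x < m)) -> Derive W x < 0)) /\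
  is_lim (fun x => W x / x ^ 2) p_infty p_infty /\
  is_lim (fun x => W x / x ^ 2) m_infty p_infty.

Definition adj (n : nat) (gamma : nat -> nat -> R) (i j : nat) : Prop :=
  (i < n)%nat /\ (j < n)%nat /\ gamma i j <> 0.

Definition connected_graph (n : nat) (gamma : nat -> nat -> R) : Prop :=
  forall i j, (i < n)%nat -> (j < n)%nat ->
    clos_refl_trans_1n nat (adj n gamma) i j.

(* Consecutive pairs of the closed walk v0 v1 ... v_{k-1} v0 *)
Definition cycle_edges (c : list nat) : list (nat * nat) :=
  match c with
  | nil => nil
  | v0 :: _ => combine c (tl c ++ v0 :: nil)
  end.

Definition is_cycle (n : nat) (gamma : nat -> nat -> R) (c : list nat) : Prop :=
  (3 <= length c)%nat /\ NoDup c /\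
  List.Forall (fun e => adj n gamma (fst e) (snd e)) (cycle_edges c).

Definition num_negative_edges (gamma : nat -> nat -> R) (c : list nat) : nat :=
  length (filter (fun e => if Rlt_dec (gamma (fst e) (snd e)) 0 then true else false)
                 (cycle_edges c)).

Definition balanced (n : nat) (gamma : nat -> nat -> R) : Prop :=
  forall c, is_cycle n gamma c -> Nat.Even (num_negative_edges gamma c).

Definition energy (n : nat) (W : R -> R) (gamma : nat -> nat -> R) (kappa : R)
  (x : nat -> R) : R :=
  sumR n (fun i => W (x i)) +
  kappa / 2 * sumR n (fun i => sumR n (fun j => gamma i j * (x i - x j) ^ 2)).

(* Main.v *)
Require Import Defs.
From Stdlib Require Import Reals Lra Lia Relations Classical.
From Coquelicot Require Import Coquelicot.
Open Scope R_scope.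

Lemma sumR_ext n f g : (forall i, (i < n)%nat -> f i = g i) -> sumR n f = sumR n g.
Proof. induction n; simpl; intros H; [reflexivity|]. rewrite IHn by (intros; apply H; lia). rewrite H by lia. reflexivity. Qed.

Lemma sumR_le n f g : (forall i, (i < n)%nat -> f i <= g i) -> sumR n f <= sumR n g.
Proof. induction n; simpl; intros H; [lra|]. assert (sumR n f <= sumR n g) by (apply IHn; intros; apply H; lia). assert (f n <= g n) by (apply H; lia). lra. Qed.

Lemma sumR_eq_le n f g : (forall i, (i < n)%nat -> f i <= g i) -> sumR n f = sumR n g ->
  forall i, (i < n)%nat -> f i = g i.
Proof. induction n; simpl; intros H He i Hi; [lia|].
  assert (sumR n f <= sumR n g) by (apply sumR_le; intros; apply H; lia). assert (f n <= g n) by (apply H; lia).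
  destruct (Nat.eq_dec i n). subst; lra. apply IHn; try lia. intros; apply H; lia. lra. Qed.

Lemma sumR_lin n a b f g : sumR n (fun i => a * f i + b * g i) = a * sumR n f + b * sumR n g.
Proof. induction n; simpl; [ring|]. rewrite IHn. ring. Qed.

Lemma sumR_update n f g k : (k < n)%nat -> (forall i, (i < n)%nat -> i <> k -> f i = g i) ->
  sumR n f = sumR n g + (f k - g k).
Proof. induction n; simpl; intros Hk H; [lia|].
  destruct (Nat.eq_dec k n). subst. rewrite (sumR_ext n f g) by (intros; apply H; lia). ring.
  rewrite IHn; [rewrite (H n) by lia; ring | lia | intros; apply H; lia]. Qed.

Lemma sumR_zero n : sumR n (fun _ => 0) = 0.
Proof. induction n; simpl; [reflexivity|]. rewrite IHn; ring. Qed.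

Lemma sumR_ge_term n f k : (k < n)%nat -> (forall i, (i < n)%nat -> 0 <= f i) -> f k <= sumR n f.
Proof. intros Hk H. rewrite (sumR_update n f (fun i => if Nat.eq_dec i k then 0 else f i) k Hk).
  destruct (Nat.eq_dec k k); [|congruence].
  assert (0 <= sumR n (fun i => if Nat.eq_dec i k then 0 else f i)).
  { rewrite <- (sumR_zero n) at 1. apply sumR_le. intros i Hi. destruct (Nat.eq_dec i k); [lra| auto]. }
  lra. intros i Hi Hik. destruct (Nat.eq_dec i k); congruence. Qed.

Lemma W_dec W : in_classW W -> forall m, 0 < m -> (forall x, 0 < x < m -> Derive W x < 0) ->
  forall e, 0 < e <= m -> W e < W 0.
Proof. intros [[Hd _] _] m Hm Hneg e He.
  destruct (MVT_cor2 W (Derive W) 0 e) as [c [Hc1 Hc2]]. lra.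
  intros c _. apply is_derive_Reals. apply Derive_correct. apply Hd.
  assert (Derive W c < 0) by (apply Hneg; lra). nra. Qed.

Lemma path_zero n gamma (x : nat -> R) a b : clos_refl_trans_1n nat (adj n gamma) a b ->
  x a = 0 -> x b <> 0 -> exists k j, adj n gamma k j /\ x k = 0 /\ x j <> 0.
Proof. induction 1; intros Ha Hb. congruence.
  destruct (Req_dec (x y) 0) as [Hy|Hy]. apply IHclos_refl_trans_1n; auto. exists x0, y; auto. Qed.

Lemma path_pos n gamma (p : nat -> R) a b : (forall i j, adj n gamma i j -> 0 < p i * p j) ->
  (forall i, (i < n)%nat -> p i <> 0) -> (a < n)%nat ->
  clos_refl_trans_1n nat (adj n gamma) a b -> 0 < p a * p b.
Proof. intros Hadj Hnz Ha H. induction H.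
  assert (p x <> 0) by auto. nra.
  assert (Hxy := Hadj _ _ H). destruct H as [_ [Hy _]]. specialize (IHclos_refl_trans_1n Hy).
  assert (p y <> 0) by auto. assert (0 < p y * p y) by nra.
  assert (0 < (p x * p y) * (p y * p z)) by nra. nra. Qed.

Definition sg (b : bool) : R := if b then 1 else -1.

Lemma pair_ineq (g xi xj : R) (b1 b2 : bool) : (b1 = b2 -> 0 <= g) -> (b1 <> b2 -> g <= 0) ->
  g * (sg b1 * Rabs xi - sg b2 * Rabs xj) ^ 2 <= g * (xi - xj) ^ 2.
Proof. intros H1 H2.
  set (A := (sg b1 * Rabs xi - sg b2 * Rabs xj) ^ 2). set (B := (xi - xj) ^ 2).
  destruct (Bool.bool_dec b1 b2) as [e|e].
  - specialize (H1 e). assert (A <= B).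
    { unfold A, B; subst b2; unfold sg; destruct b1; unfold Rabs; destruct (Rcase_abs xi), (Rcase_abs xj); nra. }
    assert (0 <= g * (B - A)) by (apply Rmult_le_pos; lra). nra.
  - specialize (H2 e). assert (B <= A).
    { unfold A, B; unfold sg; destruct b1, b2; try congruence; unfold Rabs; destruct (Rcase_abs xi), (Rcase_abs xj); nra. }
    assert (0 <= (-g) * (A - B)) by (apply Rmult_le_pos; lra). nra. Qed.

Lemma pair_eq (g xi xj : R) (b1 b2 : bool) : (b1 = b2 -> 0 <= g) -> (b1 <> b2 -> g <= 0) -> g <> 0 ->
  g * (sg b1 * Rabs xi - sg b2 * Rabs xj) ^ 2 = g * (xi - xj) ^ 2 -> 0 <= (sg b1 * xi) * (sg b2 * xj).
Proof. intros H1 H2 Hg He. apply Rmult_eq_reg_l in He; [|exact Hg]. clear H1 H2 Hg. revert He. unfold sg; destruct b1, b2;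
  unfold Rabs; destruct (Rcase_abs xi), (Rcase_abs xj); intros He; nra. Qed.

Lemma D_bound (g e xj : R) (b1 b2 : bool) : (b1 = b2 -> 0 <= g) -> (b1 <> b2 -> g <= 0) -> 0 <= e ->
  g * ((sg b1 * e - sg b2 * Rabs xj) ^ 2 - (sg b1 * 0 - sg b2 * Rabs xj) ^ 2)
  <= e ^ 2 * Rabs g - 2 * e * (Rabs g * Rabs xj).
Proof. intros H1 H2 He. assert (0 <= Rabs xj) by apply Rabs_pos. unfold sg; destruct b1, b2;
  [specialize (H1 eq_refl)|assert (g <= 0) by (apply H2; discriminate)|assert (g <= 0) by (apply H2; discriminate)|specialize (H1 eq_refl)];
  [rewrite (Rabs_right g) by lra|rewrite (Rabs_left1 g) by lra|rewrite (Rabs_left1 g) by lra|rewrite (Rabs_right g) by lra]; nra. Qed.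

Lemma W_sg (W : R -> R) (Heven : forall x, W (- x) = W x) b t : W (sg b * t) = W t.
Proof. unfold sg; destruct b. f_equal; ring. replace (-1 * t) with (- t) by ring. apply Heven. Qed.

Lemma W_sgabs (W : R -> R) (Heven : forall x, W (- x) = W x) b t : W (sg b * Rabs t) = W t.
Proof. rewrite W_sg by auto. unfold Rabs; destruct (Rcase_abs t); auto. Qed.

Lemma sumR_const n c : sumR n (fun _ => c) = INR n * c.
Proof. induction n; simpl sumR; [simpl; ring|]. rewrite IHn, S_INR. ring. Qed.

Theorem mainTheorem1
  (n : nat) (gamma : nat -> nat -> R)
  (Hsym : forall i j, (i < n)%nat -> (j < n)%nat -> gamma i j = gamma j i)
  (Hconn : connected_graph n gamma)
  (Hbal : balanced n gamma)
  (V1 : nat -> bool) (* V1 = {i | V1 i = true}, V2 = {i | V1 i = false} *)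
  (Hsame : forall i j, (i < n)%nat -> (j < n)%nat -> V1 i = V1 j -> 0 <= gamma i j)
  (Hdiff : forall i j, (i < n)%nat -> (j < n)%nat -> V1 i <> V1 j -> gamma i j <= 0)
  (W : R -> R) (HW : in_classW W)
  (kappa : R) (Hkappa : 0 < kappa)
  (x : nat -> R)
  (Hmin : forall y : nat -> R, energy n W gamma kappa x <= energy n W gamma kappa y) :
  (forall i, (i < n)%nat -> x i <> 0) /\
  (forall i j, (i < n)%nat -> (j < n)%nat ->
     ((0 < x i /\ 0 < x j) \/ (x i < 0 /\ x j < 0)) <-> V1 i = V1 j).
Proof.
  pose proof HW as HW0.
  destruct HW as [HC2 [Heven [[m [Hm [_ [_ [_ Hneg]]]]] _]]].
  assert (HWdec := W_dec W HW0 m Hm (fun t H => Hneg t (or_intror H))).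
  set (s := fun i => sg (V1 i)).
  set (z := fun i => s i * Rabs (x i)).
  set (fx := fun i => sumR n (fun j => gamma i j * (x i - x j) ^ 2)).
  set (fz := fun i => sumR n (fun j => gamma i j * (z i - z j) ^ 2)).
  assert (HWz : sumR n (fun i => W (z i)) = sumR n (fun i => W (x i))).
  { apply sumR_ext; intros i _. unfold z, s. apply W_sgabs; auto. }
  assert (Hterm : forall i j, (i < n)%nat -> (j < n)%nat ->
     gamma i j * (z i - z j) ^ 2 <= gamma i j * (x i - x j) ^ 2).
  { intros i j Hi Hj. unfold z, s. apply pair_ineq; auto. }
  assert (Hfle : forall i, (i < n)%nat -> fz i <= fx i).
  { intros i Hi. unfold fz, fx. apply sumR_le. intros j Hj. auto. }
  assert (Hex : energy n W gamma kappa x = sumR n (fun i => W (x i)) + kappa / 2 * sumR n fx) by reflexivity.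
  assert (Hez : energy n W gamma kappa z = sumR n (fun i => W (x i)) + kappa / 2 * sumR n fz).
  { unfold energy. rewrite HWz. reflexivity. }
  assert (Hs1 : sumR n fz <= sumR n fx) by (apply sumR_le; auto).
  assert (Hs2 : sumR n fx <= sumR n fz).
  { specialize (Hmin z). rewrite Hex, Hez in Hmin.
    apply (Rmult_le_reg_l (kappa / 2)); lra. }
  assert (HEz : energy n W gamma kappa z <= energy n W gamma kappa x).
  { rewrite Hex, Hez. apply Rplus_le_compat_l. apply Rmult_le_compat_l; lra. }
  assert (Hpair : forall i j, (i < n)%nat -> (j < n)%nat -> gamma i j <> 0 ->
     0 <= (s i * x i) * (s j * x j)).
  { intros i j Hi Hj Hg.
    assert (Hfe := sumR_eq_le n fz fx Hfle ltac:(lra) i Hi).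
    unfold fz, fx in Hfe.
    assert (Hte := sumR_eq_le n _ _ (fun j Hj => Hterm i j Hi Hj) Hfe j Hj).
    unfold z, s in Hte. unfold s. apply (pair_eq (gamma i j)); [apply Hsame; auto | apply Hdiff; auto | exact Hg | exact Hte]. }
  assert (Hpert : forall k j, adj n gamma k j -> x k = 0 -> x j <> 0 -> False).
  { intros k j [Hk [Hj Hg]] Hxk Hxj.
    set (G := sumR n (fun j => Rabs (gamma k j))).
    set (A := sumR n (fun j => Rabs (gamma k j) * Rabs (x j))).
    assert (HG : Rabs (gamma k j) <= G).
    { apply (sumR_ge_term n (fun j => Rabs (gamma k j))); auto. intros; apply Rabs_pos. }
    assert (HA : Rabs (gamma k j) * Rabs (x j) <= A).
    { apply (sumR_ge_term n (fun j => Rabs (gamma k j) * Rabs (x j))); auto.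
      intros; apply Rmult_le_pos; apply Rabs_pos. }
    assert (Hg0 : 0 < Rabs (gamma k j)) by (apply Rabs_pos_lt; auto).
    assert (Hx0 : 0 < Rabs (x j)) by (apply Rabs_pos_lt; auto).
    assert (HGp : 0 < G) by lra.
    assert (HAp : 0 < A) by nra.
    set (e := Rmin m (A / G)).
    assert (He0 : 0 < e) by (unfold e; apply Rmin_glb_lt; [lra | apply Rdiv_lt_0_compat; lra]).
    assert (Hem : e <= m) by (unfold e; apply Rmin_l).
    assert (HeG : e * G <= A).
    { assert (e <= A / G) by (unfold e; apply Rmin_r).
      apply (Rmult_le_compat_r G) in H; [|lra]. unfold Rdiv in H.
      rewrite Rmult_assoc, Rinv_l in H by lra. lra. }
    set (y := fun i => if Nat.eq_dec i k then s k * e else z i).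
    set (D := fun i j => gamma i j * ((y i - y j) ^ 2 - (z i - z j) ^ 2)).
    set (DD := fun i => sumR n (D i)).
    assert (HWy : sumR n (fun i => W (y i)) = sumR n (fun i => W (z i)) + (W e - W 0)).
    { rewrite (sumR_update n _ (fun i => W (z i)) k Hk).
      - unfold y. destruct (Nat.eq_dec k k); [|congruence]. unfold z, s.
        rewrite W_sg, W_sgabs, Hxk by auto. reflexivity.
      - intros i Hi Hik. unfold y. destruct (Nat.eq_dec i k); [congruence | reflexivity]. }
    assert (HQy : sumR n (fun i => sumR n (fun j => gamma i j * (y i - y j) ^ 2))
                  = sumR n fz + sumR n DD).
    { replace (sumR n fz + sumR n DD) with (1 * sumR n fz + 1 * sumR n DD) by ring.
      rewrite <- sumR_lin. apply sumR_ext. intros i Hi. unfold fz, DD, D.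
      replace (1 * sumR n (fun j => gamma i j * (z i - z j) ^ 2) +
               1 * sumR n (fun j => gamma i j * ((y i - y j) ^ 2 - (z i - z j) ^ 2)))
        with (sumR n (fun j => 1 * (gamma i j * (z i - z j) ^ 2) +
               1 * (gamma i j * ((y i - y j) ^ 2 - (z i - z j) ^ 2)))) by (rewrite sumR_lin; ring).
      apply sumR_ext. intros; ring. }
    assert (HDD : sumR n DD = 2 * DD k).
    { rewrite (sumR_update n DD (fun i => D i k) k Hk).
      - assert (D k k = 0) by (unfold D; ring).
        assert (sumR n (fun i => D i k) = DD k).
        { unfold DD. apply sumR_ext. intros i Hi. unfold D. rewrite Hsym by auto. ring. }
        lra.
      - intros i Hi Hik. unfold DD.
        rewrite (sumR_update n (D i) (fun _ => 0) k Hk).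
        + rewrite sumR_zero. ring.
        + intros j' Hj' Hjk. unfold D, y.
          destruct (Nat.eq_dec i k); [congruence|]. destruct (Nat.eq_dec j' k); [congruence|]. ring. }
    assert (HDk : DD k <= e ^ 2 * G + (-2 * e) * A).
    { unfold G, A. rewrite <- sumR_lin. unfold DD. apply sumR_le. intros j' Hj'.
      destruct (Nat.eq_dec j' k) as [->|Hjk].
      - unfold D. rewrite Hxk, Rabs_R0.
        assert (0 <= Rabs (gamma k k)) by apply Rabs_pos. replace (((y k - y k) ^ 2 - (z k - z k) ^ 2)) with 0 by ring. nra.
      - unfold D, y. destruct (Nat.eq_dec k k); [|congruence]. destruct (Nat.eq_dec j' k); [congruence|].
        unfold z, s. rewrite Hxk, Rabs_R0.
        replace (e ^ 2 * Rabs (gamma k j') + -2 * e * (Rabs (gamma k j') * Rabs (x j')))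
          with (e ^ 2 * Rabs (gamma k j') - 2 * e * (Rabs (gamma k j') * Rabs (x j'))) by ring.
        apply D_bound; [apply Hsame | apply Hdiff | ]; auto; lra. }
    assert (Hey : energy n W gamma kappa y < energy n W gamma kappa z).
    { unfold energy. rewrite HWy, HQy, HDD. fold fz.
      assert (HWe : W e < W 0) by (apply HWdec; lra).
      assert (e ^ 2 * G + -2 * e * A < 0) by nra.
      assert (kappa / 2 * (2 * DD k) <= kappa / 2 * (2 * (e ^ 2 * G + -2 * e * A))) by
        (apply Rmult_le_compat_l; lra).
      assert (kappa / 2 * (2 * (e ^ 2 * G + -2 * e * A)) < 0).
      { assert (0 < kappa / 2) by lra. nra. }
      lra. }
    specialize (Hmin y). lra. }
  assert (Hnz : forall k, (k < n)%nat -> x k <> 0).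
  { intros k Hk Hxk.
    destruct (classic (exists i, (i < n)%nat /\ x i <> 0)) as [[i1 [Hi1 Hxi1]] | Hall].
    - destruct (path_zero n gamma x k i1 (Hconn k i1 Hk Hi1) Hxk Hxi1) as [k' [j' [Ha [H1 H2]]]].
      exact (Hpert k' j' Ha H1 H2).
    - assert (H0 : forall i, (i < n)%nat -> x i = 0).
      { intros i Hi. apply NNPP. intro H. apply Hall. eauto. }
      set (y := fun i => s i * m).
      assert (Hx : energy n W gamma kappa x = INR n * W 0).
      { rewrite Hex. rewrite <- sumR_const.
        rewrite (sumR_ext n (fun i => W (x i)) (fun _ => W 0)) by (intros i Hi; rewrite H0; auto).
        assert (sumR n fx = 0).
        { rewrite <- (sumR_zero n). apply sumR_ext. intros i Hi. unfold fx.
          rewrite <- (sumR_zero n). apply sumR_ext. intros j Hj. rewrite !H0 by auto. ring. }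
        rewrite H. ring. }
      assert (Hy : energy n W gamma kappa y <= INR n * W m).
      { unfold energy. rewrite <- sumR_const.
        rewrite (sumR_ext n (fun i => W (y i)) (fun _ => W m)) by (intros i Hi; unfold y, s; apply W_sg; auto).
        assert (sumR n (fun i => sumR n (fun j => gamma i j * (y i - y j) ^ 2)) <= 0).
        { rewrite <- (sumR_zero n). apply sumR_le. intros i Hi.
          rewrite <- (sumR_zero n). apply sumR_le. intros j Hj. unfold y, s, sg.
          destruct (Bool.bool_dec (V1 i) (V1 j)) as [e|e].
          - rewrite e. destruct (V1 j); nra.
          - specialize (Hdiff i j Hi Hj e). destruct (V1 i), (V1 j); try congruence;
            assert (0 <= (2 * m) ^ 2) by nra; nra. }
        assert (kappa / 2 * sumR n (fun i => sumR n (fun j => gamma i j * (y i - y j) ^ 2)) <= 0).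
        { assert (0 < kappa / 2) by lra. nra. }
        lra. }
      assert (0 < INR n) by (apply lt_0_INR; lia).
      assert (W m < W 0) by (apply HWdec; lra).
      specialize (Hmin y). nra. }
  split; [exact Hnz|].
  assert (Hp : forall i j, (i < n)%nat -> (j < n)%nat -> 0 < (s i * x i) * (s j * x j)).
  { intros i j Hi Hj. apply (path_pos n gamma (fun i => s i * x i)); auto.
    - intros a b [Ha [Hb Hg]]. assert (H1 := Hpair a b Ha Hb Hg).
      assert (s a * x a <> 0). { unfold s, sg. destruct (V1 a); specialize (Hnz a Ha); lra. }
      assert (s b * x b <> 0). { unfold s, sg. destruct (V1 b); specialize (Hnz b Hb); lra. }
      assert ((s a * x a) * (s b * x b) <> 0) by (apply Rmult_integral_contrapositive; auto). lra.
    - intros a Ha. unfold s, sg. destruct (V1 a); specialize (Hnz a Ha); lra. }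
  intros i j Hi Hj. specialize (Hp i j Hi Hj). specialize (Hnz i Hi) as Hni. specialize (Hnz j Hj) as Hnj.
  unfold s, sg in Hp. destruct (V1 i), (V1 j); split; intros; try reflexivity; try discriminate;
    try (destruct (Rlt_or_le 0 (x i)); destruct (Rlt_or_le 0 (x j)); nra); nra.
Qed.
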